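(* Let $2^{t-1}<n\le 2^t-4$, $i=2^t-3-n$, $j=n-2^{t-1}+1$, $W_2=\mathbb{F}_2[w_2,w_3]$. Then for all $x,y,z\in W_2$, \[ q_{n-2}x+q_{n-1}y+q_nz=\det\begin{pmatrix} x& r_j& w_3q_{i-1}\\ y& w_3r_{j-2}& q_{i+1}\\ z& r_{j-1}& q_i\end{pmatrix} \] (over $\mathbb{F}_2$). Moreover, the kernel of the $W_2$-linear map $d_1\colon W_2^{\oplus 3}\to W_2$, $(x,y,z)\mapsto q_{n-2}x+q_{n-1}y+q_nz$, is a free graded $W_2$-module of rank $2$ with basis $u=(r_j,\,w_3r_{j-2},\,r_{j-1})^{\mathrm t}$ and $v=(w_3q_{i-1},\,q_{i+1},\,q_i)^{\mathrm t}$.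
   Context: $W_2$ is graded by $\deg w_2=2,\deg w_3=3$. $q_0=1$, $q_m=0$ for $m<0$, $q_m=w_2q_{m-2}+w_3q_{m-3}$ for $m\ge1$; $r_0=1$, $r_m=0$ for $m<0$, $r_{m+1}=w_2r_m+w_3^2r_{m-2}$ for $m\ge0$. *)

(* Defs.v *)
From HB Require Import structures.
From mathcomp Require Import all_boot all_order all_algebra.
Set Implicit Arguments. Unset Strict Implicit. Unset Printing Implicit Defensive.
Import GRing.Theory.
Local Open Scope ring_scope.

(* W_2 = F_2[w_2, w_3], realised as the polynomial ring F_2[w_2][w_3]. *)
Definition W2 : Type := {poly {poly 'F_2}}.
Definition w2 : W2 := ('X)%:P.   (* inner variable, deg 2 *)
Definition w3 : W2 := 'X.        (* outer variable, deg 3 *)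

(* q_m for m >= 0 (q_m = 0 for m < 0):
   q_0 = 1, q_1 = w2 q_{-1} + w3 q_{-2} = 0, q_2 = w2 q_0 + w3 q_{-1} = w2,
   q_{m+3} = w2 q_{m+1} + w3 q_m. *)
Fixpoint q (m : nat) : W2 :=
  match m with
  | 0 => 1
  | 1 => 0
  | 2 => w2
  | ((k as k0).+1 as k1).+2 => w2 * q k1 + w3 * q k0
  end.

(* r_m for m >= 0 (r_m = 0 for m < 0):
   r_0 = 1, r_1 = w2 r_0 = w2, r_2 = w2 r_1 = w2^2,
   r_{m+3} = w2 r_{m+2} + w3^2 r_m. *)
Fixpoint r (m : nat) : W2 :=
  match m with
  | 0 => 1
  | 1 => w2
  | 2 => w2 * w2
  | (((k as k0).+1).+1 as k2).+1 => w2 * r k2 + w3 ^+ 2 * r k0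
  end.

Definition mx3 (a b c : W2 * W2 * W2) : 'M[W2]_3 :=
  \matrix_(i < 3, j < 3)
    let col := nth a [:: a; b; c] j in
    nth 0 [:: col.1.1; col.1.2; col.2] i.

(* Main.v *)
Require Import Defs.
From HB Require Import structures.
From mathcomp Require Import all_boot all_order all_algebra.
From mathcomp Require Import ring zify.
Import GRing.Theory.
Local Open Scope ring_scope.


Lemma two0F : (2%:R : 'F_2) = 0.
Proof. by apply/val_inj. Qed.
Lemma two0 : (2%:R : W2) = 0.
Proof. by rewrite /W2 -!polyC_natr two0F !polyC0. Qed.

Lemma ch2eq (K A B : W2) : A - B = 2%:R * K -> A = B.
Proof. by rewrite two0 mul0r => /eqP; rewrite subr_eq0 => /eqP. Qed.
Ltac ring2 K := apply: (ch2eq K); ring.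

Lemma qS3 k : q k.+3 = w2 * q k.+1 + w3 * q k. Proof. by []. Qed.
Lemma rS3 k : r k.+3 = w2 * r k.+2 + w3 ^+ 2 * r k. Proof. by []. Qed.

Lemma qdbl m : [/\ q (2* m+2) = q (m+1)^+2 + w2 * q m ^+2,
  q (2* m+3) = w3 * q m ^+2 & q (2* m+4) = q (m+2)^+2 + w2 * q (m+1)^+2].
Proof.
elim: m => [|m [IH1 IH2 IH3]].
  split; [change (w2 = 0 ^+ 2 + w2 * 1 ^+ 2) | change (w2 * 0 + w3 * 1 = w3 * 1 ^+ 2) | change (w2 * w2 + w3 * 0 = w2 ^+ 2 + w2 * 0 ^+ 2)]; ring.
have e5 : (2 * m.+1 + 3 = (2* m+2).+3)%N by lia.
have e6 : (2 * m.+1 + 4 = (2* m+3).+3)%N by lia.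
have e4 : (2 * m.+1 + 2 = 2* m+4)%N by lia.
rewrite e4 e5 e6 !qS3 -/(addn _ 1) -/(addn _ 2).
have -> : ((2* m+2).+1 = 2* m+3)%N by lia.
have -> : ((2* m+3).+1 = 2* m+4)%N by lia.
have -> : (m.+1 + 1 = m + 2)%N by lia.
have -> : (m.+1 + 2 = (m).+3)%N by lia.
rewrite IH2 IH3 IH1 qS3.
have -> : (m+2 = m.+2)%N by lia.
have -> : (m+1 = m.+1)%N by lia.
split => //; move: (q m) (q m.+1) (q m.+2) => a b c; move: w2 w3 => w2 w3.
  ring2 (w2 * w3 * a ^+ 2).
ring2 (- (w2 * w3 * b * a)).
Qed.

Lemma rdbl m : [/\ r (2 * m + 2) = r (m+1)^+2,
  r (2 * m + 3) = w2 * r (m+1) ^+2 + w3^+2 * r m ^+ 2 & r (2 * m + 4) = r (m+2)^+2].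
Proof.
elim: m => [|m [IH1 IH2 IH3]].
  split; [change (w2 * w2 = w2 ^+ 2) | change (w2 * (w2 * w2) + w3 ^+ 2 * 1 = w2 * w2 ^+ 2 + w3 ^+ 2 * 1 ^+ 2)
   | change (w2 * (w2 * (w2 * w2) + w3 ^+ 2 * 1) + w3 ^+ 2 * w2 = (w2 * w2) ^+ 2)]; try ring.
  ring2 (w2 * w3 ^+2).
have e5 : (2 * m.+1 + 3 = (2* m+2).+3)%N by lia.
have e6 : (2 * m.+1 + 4 = (2* m+3).+3)%N by lia.
have e4 : (2 * m.+1 + 2 = 2* m+4)%N by lia.
rewrite e4 e5 e6 !rS3.
have -> : ((2* m+2).+2 = 2* m+4)%N by lia.
have -> : ((2* m+3).+2 = (2* m+2).+3)%N by lia.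
rewrite rS3.
have -> : ((2* m+2).+2 = 2* m+4)%N by lia.
have -> : (m.+1 + 1 = m + 2)%N by lia.
have -> : (m.+1 + 2 = (m).+3)%N by lia.
rewrite IH1 IH2 IH3 rS3.
have -> : (m+2 = m.+2)%N by lia.
have -> : (m+1 = m.+1)%N by lia.
split => //; move: (r m) (r m.+1) (r m.+2) => a b c.
ring2 (w2 * w3^+2 * b^+2 - w2 * w3^+2 * c * a).
Qed.

Definition qz (k : int) : W2 := if k is Posz m then q m else 0.
Definition rz (k : int) : W2 := if k is Posz m then r m else 0.

Lemma qzN k : k < 0 -> qz k = 0. Proof. by case: k. Qed.
Lemma rzN k : k < 0 -> rz k = 0. Proof. by case: k. Qed.
Lemma qzP (m : nat) : qz m%:Z = q m. Proof. by []. Qed.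
Lemma rzP (m : nat) : rz m%:Z = r m. Proof. by []. Qed.

Lemma qz_dbl0 (m : int) : qz (2 * m) = qz m ^+ 2 + w2 * qz (m - 1) ^+ 2.
Proof.
case: m => [[|k]|k].
- change (1 = 1 ^+ 2 + w2 * (0 : W2) ^+ 2); ring.
- rewrite (_ : 2 * _ = (2 * k + 2)%N%:Z); last by lia.
  rewrite (_ : _ - 1 = k%:Z); last by lia.
  rewrite !qzP; case: (qdbl k) => -> _ _; by rewrite addn1.
- rewrite !qzN; [ring | lia..].
Qed.

Lemma qz_dbl1 (m : int) : qz (2 * m + 1) = w3 * qz (m - 1) ^+ 2.
Proof.
case: m => [[|k]|k].
- change (0 = w3 * (0 : W2) ^+ 2); ring.
- rewrite (_ : 2 * _ + 1 = (2 * k + 3)%N%:Z); last by lia.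
  rewrite (_ : _ - 1 = k%:Z); last by lia.
  by rewrite !qzP; case: (qdbl k) => _ -> _.
- rewrite !qzN; [ring | lia..].
Qed.

Lemma rz_dbl0 (m : int) : rz (2 * m) = rz m ^+ 2.
Proof.
case: m => [[|k]|k].
- change (1 = (1 : W2) ^+ 2); ring.
- rewrite (_ : 2 * _ = (2 * k + 2)%N%:Z); last by lia.
  rewrite !rzP; case: (rdbl k) => -> _ _; by rewrite addn1.
- rewrite !rzN; [ring | lia..].
Qed.

Lemma rz_dbl1 (m : int) : rz (2 * m + 1) = w2 * rz m ^+ 2 + w3 ^+ 2 * rz (m - 1) ^+ 2.
Proof.
case: m => [[|k]|k].
- change (w2 = w2 * 1 ^+ 2 + w3 ^+ 2 * (0 : W2) ^+ 2); ring.
- rewrite (_ : 2 * _ + 1 = (2 * k + 3)%N%:Z); last by lia.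
  rewrite (_ : _ - 1 = k%:Z); last by lia.
  rewrite !rzP; case: (rdbl k) => _ -> _; by rewrite addn1.
- rewrite !rzN; [ring | lia..].
Qed.

Lemma qz_rec (k : int) : -2 <= k -> qz (k + 3) = w2 * qz (k + 1) + w3 * qz k.
Proof.
case: k => [k|[|[|k]]] // _.
- rewrite (_ : _ + 3 = k.+3%:Z); last by lia.
  rewrite (_ : _ + 1 = k.+1%:Z); last by lia.
  by rewrite !qzP.
- change (w2 = w2 * 1 + w3 * (0 : W2)); ring.
- change (0 = w2 * 0 + w3 * (0 : W2)); ring.
Qed.

Lemma int_parity (i : int) : exists a, i = 2 * a \/ i = 2 * a + 1.
Proof. exists (i %/ 2)%Z; lia. Qed.

Definition E1 (i j : int) := qz (i + 2 * j - 1) = w3 * rz (j - 2) * qz i + rz (j - 1) * qz (i + 1).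
Definition E2 (i j : int) := qz (i + 2 * j) = rz j * qz i + w3 * rz (j - 1) * qz (i - 1).
Definition E3 (i j : int) := qz (i + 2 * j + 1) = rz j * qz (i + 1) + w3 ^+ 2 * rz (j - 2) * qz (i - 1).

Lemma E1_eq i j k1 k2 k3 k4 k5 : k1 = i + 2 * j - 1 -> k2 = j - 2 -> k3 = i -> k4 = j - 1 -> k5 = i + 1 ->
  qz k1 = w3 * rz k2 * qz k3 + rz k4 * qz k5 -> E1 i j.
Proof. by move=> -> -> -> -> ->. Qed.
Lemma E2_eq i j k1 k2 k3 k4 k5 : k1 = i + 2 * j -> k2 = j -> k3 = i -> k4 = j - 1 -> k5 = i - 1 ->
  qz k1 = rz k2 * qz k3 + w3 * rz k4 * qz k5 -> E2 i j.
Proof. by move=> -> -> -> -> ->. Qed.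
Lemma E3_eq i j k1 k2 k3 k4 k5 : k1 = i + 2 * j + 1 -> k2 = j -> k3 = i + 1 -> k4 = j - 2 -> k5 = i - 1 ->
  qz k1 = rz k2 * qz k3 + w3 ^+ 2 * rz k4 * qz k5 -> E3 i j.
Proof. by move=> -> -> -> -> ->. Qed.

Arguments E1_eq {i j k1 k2 k3 k4 k5}.
Arguments E2_eq {i j k1 k2 k3 k4 k5}.
Arguments E3_eq {i j k1 k2 k3 k4 k5}.

Lemma bm2 (b : int) : b - 1 - 1 = b - 2. Proof. lia. Qed.

Lemma derO1 a b : E3 a b -> E2 a b ->
  qz (2 * (a + 2 * b + 1)) = w3 * rz (2 * (b - 1) + 1) * qz (2 * a + 1) + rz (2 * b) * qz (2 * (a + 1)).
Proof.
rewrite /E3 /E2 => e3 e2.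
rewrite !qz_dbl0 qz_dbl1 rz_dbl0 rz_dbl1 [a + 2 * b + 1 - 1]addrK [a + 1 - 1]addrK bm2 e3 e2.
move: (qz (a + 1)) (qz a) (qz (a - 1)) (rz b) (rz (b - 1)) (rz (b - 2)) => Qa1 Qa Qm1 Rb Rb1 Rb2.
ring2 (Qa1*Qm1*Rb*Rb2*w3^+2 + Qa*Qm1*Rb*Rb1*w2*w3).
Qed.

Lemma derO2 a b : E2 a b ->
  qz (2 * (a + 2 * b + 1) + 1) = rz (2 * b + 1) * qz (2 * a + 1) + w3 * rz (2 * b) * qz (2 * a).
Proof.
rewrite /E2 => e2.
rewrite qz_dbl0 !qz_dbl1 rz_dbl0 rz_dbl1 [a + 2 * b + 1 - 1]addrK e2.
move: (qz a) (qz (a - 1)) (rz b) (rz (b - 1)) => Qa Qm1 Rb Rb1.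
ring2 (Qa*Qm1*Rb*Rb1*w3^+2 - Qm1^+2*Rb^+2*w2*w3).
Qed.

Lemma derO3 a b : -2 <= a + 2 * b - 1 -> E1 a b -> E2 a b -> E3 a b ->
  qz (2 * (a + 2 * b + 2)) = rz (2 * b + 1) * qz (2 * (a + 1)) + w3 ^+ 2 * rz (2 * (b - 1) + 1) * qz (2 * a).
Proof.
rewrite /E1 /E2 /E3 => hk e1 e2 e3.
have h := qz_rec _ hk.
rewrite (_ : a + 2 * b - 1 + 3 = a + 2 * b + 2) in h; last by lia.
rewrite (_ : a + 2 * b - 1 + 1 = a + 2 * b) in h; last by lia.
rewrite !qz_dbl0 !rz_dbl1 [a + 1 - 1]addrK bm2.
rewrite (_ : a + 2 * b + 2 - 1 = a + 2 * b + 1); last by lia.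
rewrite h e1 e2 e3.
move: (qz (a + 1)) (qz a) (qz (a - 1)) (rz b) (rz (b - 1)) (rz (b - 2)) => Qa1 Qa Qm1 Rb Rb1 Rb2.
ring2 (Qa*Qm1*Rb*Rb1*w2^+2*w3 + Qa^+2*Rb*Rb2*w2*w3^+2 + Qa*Qa1*Rb*Rb1*w2*w3 + Qa*Qm1*Rb1*Rb2*w2*w3^+3 + Qa1*Qm1*Rb1^+2*w2*w3^+2 + Qa*Qa1*Rb1*Rb2*w3^+3 + Qa1*Qm1*Rb*Rb2*w2*w3^+2 - Qa^+2*Rb1^+2*w2*w3^+2).
Qed.

Lemma derEv1 c b : E1 c b ->
  qz (2 * (c + 2 * b) + 1) = w3 * rz (2 * (b - 1)) * qz (2 * (c + 1)) + rz (2 * (b - 1) + 1) * qz (2 * (c + 1) + 1).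
Proof.
rewrite /E1 => e1.
rewrite !qz_dbl1 qz_dbl0 rz_dbl0 rz_dbl1 [c + 1 - 1]addrK bm2 e1.
move: (qz (c + 1)) (qz c) (rz (b - 1)) (rz (b - 2)) => Qa1 Qa Rb1 Rb2.
ring2 (Qa*Qa1*Rb1*Rb2*w3^+2 - Qa^+2*Rb1^+2*w2*w3).
Qed.

Lemma derEv2 c b : E2 c b -> E3 c b ->
  qz (2 * (c + 2 * b + 1)) = rz (2 * b) * qz (2 * (c + 1)) + w3 * rz (2 * (b - 1) + 1) * qz (2 * c + 1).
Proof.
rewrite /E2 /E3 => e2 e3.
rewrite !qz_dbl0 qz_dbl1 rz_dbl0 rz_dbl1 [c + 1 - 1]addrK [c + 2 * b + 1 - 1]addrK bm2 e2 e3.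
move: (qz (c + 1)) (qz c) (qz (c - 1)) (rz b) (rz (b - 1)) (rz (b - 2)) => Qa1 Qa Qm1 Rb Rb1 Rb2.
ring2 (Qa1*Qm1*Rb*Rb2*w3^+2 + Qa*Qm1*Rb*Rb1*w2*w3).
Qed.

Lemma derEv3 c b : E2 c b ->
  qz (2 * (c + 2 * b + 1) + 1) = rz (2 * b) * qz (2 * (c + 1) + 1) + w3 ^+ 2 * rz (2 * (b - 1)) * qz (2 * c + 1).
Proof.
rewrite /E2 => e2.
rewrite !qz_dbl1 !rz_dbl0 [c + 1 - 1]addrK [c + 2 * b + 1 - 1]addrK e2.
move: (qz c) (qz (c - 1)) (rz b) (rz (b - 1)) => Qa Qm1 Rb Rb1.
ring2 (Qa*Qm1*Rb*Rb1*w3^+2).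
Qed.

Definition level (s : int) : Prop := forall i : int,
 [/\ -2 <= i <= s -> E1 i (s - i), -1 <= i <= s + 1 -> E2 i (s - i) & -1 <= i <= s -> E3 i (s - i)].

Lemma qzm1 : qz (-1) = 0. Proof. by []. Qed.
Lemma qzm2 : qz (-2) = 0. Proof. by []. Qed.
Lemma rzm1 : rz (-1) = 0. Proof. by []. Qed.
Lemma rzm2 : rz (-2) = 0. Proof. by []. Qed.
Lemma qz0 : qz 0 = 1. Proof. by []. Qed.
Lemma rz0 : rz 0 = 1. Proof. by []. Qed.

Lemma level_base : level (-1).
Proof.
move=> i; split => /andP[h1 h2].
- have [->|->] : i = -2 \/ i = -1 by lia.
  + apply: (@E1_eq _ _ (-1) (-1) (-2) 0 (-1)); try lia.
    change ((0:W2) = w3 * 0 * 0 + 1 * 0); ring.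
  + apply: (@E1_eq _ _ (-2) (-2) (-1) (-1) 0); try lia.
    change ((0:W2) = w3 * 0 * 0 + 0 * 1); ring.
- have [->|->] : i = -1 \/ i = 0 by lia.
  + apply: (@E2_eq _ _ (-1) 0 (-1) (-1) (-2)); try lia.
    change ((0:W2) = 1 * 0 + w3 * 0 * 0); ring.
  + apply: (@E2_eq _ _ (-2) (-1) 0 (-2) (-1)); try lia.
    change ((0:W2) = 0 * 1 + w3 * 0 * 0); ring.
- have -> : i = -1 by lia.
  apply: (@E3_eq _ _ 0 0 0 (-2) (-2)); try lia.
  change ((1:W2) = 1 * 1 + w3 ^+ 2 * 0 * 0); ring.
Qed.

Lemma level_step s : -1 <= s -> level s -> level (2 * s + 2).
Proof.
move=> hs L i; have [a [->|->]] := int_parity i.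
- have [c ->] : exists c, a = c + 1 by exists (a - 1); lia.
  have [L1 L2 L3] := L c.
  split => /andP [h1 h2].
  + have e1 : E1 c (s - c) by apply: L1; apply/andP; split; lia.
    refine (E1_eq _ _ _ _ _ (derEv1 _ _ e1)); lia.
  + have e2 : E2 c (s - c) by apply: L2; apply/andP; split; lia.
    have e3 : E3 c (s - c) by apply: L3; apply/andP; split; lia.
    refine (E2_eq _ _ _ _ _ (derEv2 _ _ e2 e3)); lia.
  + have e2 : E2 c (s - c) by apply: L2; apply/andP; split; lia.
    refine (E3_eq _ _ _ _ _ (derEv3 _ _ e2)); lia.
- have [L1 L2 L3] := L a.
  split => /andP [h1 h2].
  + have e2 : E2 a (s - a) by apply: L2; apply/andP; split; lia.
    have e3 : E3 a (s - a) by apply: L3; apply/andP; split; lia.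
    refine (E1_eq _ _ _ _ _ (derO1 _ _ e3 e2)); lia.
  + have e2 : E2 a (s - a) by apply: L2; apply/andP; split; lia.
    refine (E2_eq _ _ _ _ _ (derO2 _ _ e2)); lia.
  + have e1 : E1 a (s - a) by apply: L1; apply/andP; split; lia.
    have e2 : E2 a (s - a) by apply: L2; apply/andP; split; lia.
    have e3 : E3 a (s - a) by apply: L3; apply/andP; split; lia.
    have hk : -2 <= a + 2 * (s - a) - 1 by lia.
    refine (E3_eq _ _ _ _ _ (derO3 _ _ hk e1 e2 e3)); lia.
Qed.

Lemma level_pow k : level (2 ^+ k - 2).
Proof.
elim: k => [|k IH].
  by rewrite expr0 (_ : 1 - 2 = -1) //; exact: level_base.
have h1 : 1 <= (2 : int) ^+ k by apply: Num.Theory.exprn_ege1.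
rewrite exprS (_ : 2 * 2 ^+ k - 2 = 2 * (2 ^+ k - 2) + 2); last by ring.
apply: level_step => //; lia.
Qed.


Lemma w3E : w3 = 'X. Proof. by []. Qed.
Lemma hw3 : w3.[0] = 0. Proof. by rewrite w3E hornerX. Qed.
Lemma hw2 : w2.[0] = 'X. Proof. by rewrite /w2 hornerC. Qed.

Lemma cancelX K : forall a' g0 g1 g2 f0 f1 f2 : W2, (f0.[0] != 0 \/ f1.[0] != 0) ->
  a' * f0 = w3 ^+ K * g0 -> a' * f1 = w3 ^+ K * g1 -> a' * f2 = w3 ^+ K * g2 ->
  exists al, [/\ g0 = al * f0, g1 = al * f1 & g2 = al * f2].
Proof.
elim: K => [|K IH] a' g0 g1 g2 f0 f1 f2 hf e0 e1 e2.
  by exists a'; rewrite e0 e1 e2 !expr0 !mul1r.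
have ha : a'.[0] = 0.
  have [h|h] := hf.
  - move/(congr1 (horner^~ 0)): e0; rewrite !hornerM exprS hornerM hw3 !mul0r.
    by move/eqP; rewrite mulf_eq0 (negbTE h) orbF => /eqP.
  - move/(congr1 (horner^~ 0)): e1; rewrite !hornerM exprS hornerM hw3 !mul0r.
    by move/eqP; rewrite mulf_eq0 (negbTE h) orbF => /eqP.
have /factor_theorem [a'' ha''] : root a' 0 by rewrite /root ha.
rewrite polyC0 subr0 in ha''.
have hX : ('X : W2) != 0 by rewrite polyX_eq0.
have canc (f g : W2) : a' * f = w3 ^+ K.+1 * g -> a'' * f = w3 ^+ K * g.
  rewrite ha'' exprS w3E -mulrA mulrCA -mulrA => h.
  by apply: (mulfI hX); rewrite mulrCA h [RHS]mulrCA.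
exact: (IH a'' g0 g1 g2 f0 f1 f2 hf (canc _ _ e0) (canc _ _ e1) (canc _ _ e2)).
Qed.

Lemma propor (f0 f1 f2 g0 g1 g2 c0 c1 c2 : W2) K :
  c0 * f0 + c1 * f1 + c2 * f2 = w3 ^+ K ->
  g0 * f1 = g1 * f0 -> g0 * f2 = g2 * f0 -> g1 * f2 = g2 * f1 ->
  (f0.[0] != 0 \/ f1.[0] != 0) ->
  exists al, [/\ g0 = al * f0, g1 = al * f1 & g2 = al * f2].
Proof.
move=> hc h01 h02 h12 hf.
apply: (cancelX K (c0 * g0 + c1 * g1 + c2 * g2) g0 g1 g2 f0 f1 f2 hf); rewrite -hc.
- have -> : (c0 * g0 + c1 * g1 + c2 * g2) * f0 = c0 * g0 * f0 + c1 * (g1 * f0) + c2 * (g2 * f0) by ring.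
  rewrite -h01 -h02; ring.
- have -> : (c0 * g0 + c1 * g1 + c2 * g2) * f1 = c0 * (g0 * f1) + c1 * g1 * f1 + c2 * (g2 * f1) by ring.
  rewrite h01 -h12; ring.
- have -> : (c0 * g0 + c1 * g1 + c2 * g2) * f2 = c0 * (g0 * f2) + c1 * (g1 * f2) + c2 * g2 * f2 by ring.
  rewrite h02 h12; ring.
Qed.

Lemma hnz (p : W2) : p.[0] != 0 -> p != 0.
Proof. by apply: contra => /eqP ->; rewrite horner0. Qed.

Lemma kernel_gen (u0 u1 u2 v0 v1 v2 x y z c0 c1 c2 : W2) K :
  c0 * (u1 * v2 + u2 * v1) + c1 * (u0 * v2 + u2 * v0) + c2 * (u0 * v1 + u1 * v0) = w3 ^+ K ->
  ((u1 * v2 + u2 * v1).[0] != 0 \/ (u0 * v2 + u2 * v0).[0] != 0) ->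
  (u1 * v2 + u2 * v1) * x + (u0 * v2 + u2 * v0) * y + (u0 * v1 + u1 * v0) * z = 0 ->
  exists a b, [/\ x = a * u0 + b * v0, y = a * u1 + b * v1 & z = a * u2 + b * v2].
Proof.
set f0 := u1 * v2 + u2 * v1; set f1 := u0 * v2 + u2 * v0; set f2 := u0 * v1 + u1 * v0.
set D := f0 * x + f1 * y + f2 * z.
move=> hc hf hd.
have [al [g0e g1e g2e]] : exists al, [/\ y * v2 + z * v1 = al * f0, x * v2 + z * v0 = al * f1
     & x * v1 + y * v0 = al * f2].
  apply: (propor _ _ _ _ _ _ _ _ _ _ hc _ _ _ hf).
  - have -> : (y * v2 + z * v1) * f1 = (x * v2 + z * v0) * f0 + v2 * D.
      rewrite /D /f0 /f1 /f2; ring2 (- u1*v2^+2*x - u2*v1*v2*x - u1*v0*v2*z).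
    by rewrite hd mulr0 addr0.
  - have -> : (y * v2 + z * v1) * f2 = (x * v1 + y * v0) * f0 + v1 * D.
      rewrite /D /f0 /f1 /f2; ring2 (- u1*v1*v2*x - u2*v1^+2*x - u2*v0*v1*y).
    by rewrite hd mulr0 addr0.
  - have -> : (x * v2 + z * v0) * f2 = (x * v1 + y * v0) * f1 + v0 * D.
      rewrite /D /f0 /f1 /f2; ring2 (- u2*v0*v1*x - u0*v0*v2*y - u2*v0^+2*y).
    by rewrite hd mulr0 addr0.
have [be [h0e h1e h2e]] : exists be, [/\ u1 * z + u2 * y = be * f0, u0 * z + u2 * x = be * f1
     & u0 * y + u1 * x = be * f2].
  apply: (propor _ _ _ _ _ _ _ _ _ _ hc _ _ _ hf).
  - have -> : (u1 * z + u2 * y) * f1 = (u0 * z + u2 * x) * f0 + u2 * D.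
      rewrite /D /f0 /f1 /f2; ring2 (- u0*u2*v1*z - u1*u2*v2*x - u2^+2*v1*x).
    by rewrite hd mulr0 addr0.
  - have -> : (u1 * z + u2 * y) * f2 = (u0 * y + u1 * x) * f0 + u1 * D.
      rewrite /D /f0 /f1 /f2; ring2 (- u0*u1*v2*y - u1^+2*v2*x - u1*u2*v1*x).
    by rewrite hd mulr0 addr0.
  - have -> : (u0 * z + u2 * x) * f2 = (u0 * y + u1 * x) * f1 + u0 * D.
      rewrite /D /f0 /f1 /f2; ring2 (- u0^+2*v2*y - u0*u2*v0*y - u0*u1*v2*x).
    by rewrite hd mulr0 addr0.
exists al, be.
have [h|h] := hf; move/hnz: h => h.
- have ex : x * f0 = u0 * (y * v2 + z * v1) + v0 * (u1 * z + u2 * y) + D.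
    rewrite /D /f0 /f1 /f2; ring2 (- u0*v2*y - u0*v1*z - u1*v0*z - u2*v0*y).
  have ey : y * f0 = u1 * (y * v2 + z * v1) + v1 * (u1 * z + u2 * y).
    rewrite /D /f0 /f1 /f2; ring2 (- u1*v1*z).
  have ez : z * f0 = u2 * (y * v2 + z * v1) + v2 * (u1 * z + u2 * y).
    rewrite /D /f0 /f1 /f2; ring2 (- u2*v2*y).
  rewrite hd addr0 g0e h0e in ex; rewrite g0e h0e in ey; rewrite g0e h0e in ez.
  split; apply: (mulIf h); [rewrite ex | rewrite ey | rewrite ez]; ring.
- have ex : x * f1 = u0 * (x * v2 + z * v0) + v0 * (u0 * z + u2 * x).
    rewrite /D /f0 /f1 /f2; ring2 (- u0*v0*z).
  have ey : y * f1 = u1 * (x * v2 + z * v0) + v1 * (u0 * z + u2 * x) + D.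
    rewrite /D /f0 /f1 /f2; ring2 (- u1*v2*x - u1*v0*z - u0*v1*z - u2*v1*x).
  have ez : z * f1 = u2 * (x * v2 + z * v0) + v2 * (u0 * z + u2 * x).
    rewrite /D /f0 /f1 /f2; ring2 (- u2*v2*x).
  rewrite hd addr0 g1e h1e in ey; rewrite g1e h1e in ex; rewrite g1e h1e in ez.
  split; apply: (mulIf h); [rewrite ex | rewrite ey | rewrite ez]; ring.
Qed.

Lemma det3 (x y z : W2 * W2 * W2) : \det (mx3 x y z) =
  x.1.1 * (y.1.2 * z.2 - y.2 * z.1.2) - x.1.2 * (y.1.1 * z.2 - y.2 * z.1.1)
  + x.2 * (y.1.1 * z.1.2 - y.1.2 * z.1.1).
Proof.
rewrite (expand_det_col _ 0) !big_ord_recl big_ord0 /cofactor.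
rewrite !(expand_det_col _ 0) !big_ord_recl !big_ord0 /cofactor.
rewrite !det_mx11 !mxE /= /bump /=. ring.
Qed.

Lemma det_gen (x y z u0 u1 u2 v0 v1 v2 : W2) :
 (u1*v2 + u2*v1) * x + (u0*v2 + u2*v0) * y + (u0*v1 + u1*v0) * z =
   \det (mx3 (x, y, z) (u0, u1, u2) (v0, v1, v2)).
Proof. rewrite det3 /=. ring2 (u2*v1*x + u0*v2*y + u1*v0*z). Qed.

Lemma surj_gen (a b u0 u1 u2 v0 v1 v2 : W2) :
 (u1*v2 + u2*v1) * (a * u0 + b * v0) + (u0*v2 + u2*v0) * (a * u1 + b * v1)
   + (u0*v1 + u1*v0) * (a * u2 + b * v2) = 0.
Proof.
ring2 (a*u0*u1*v2 + a*u0*u2*v1 + b*u1*v0*v2 + b*u2*v0*v1 + a*u1*u2*v0 + b*u0*v1*v2).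
Qed.

Lemma inj_gen (a b u0 u1 u2 v0 v1 v2 : W2) :
  ((u1 * v2 + u2 * v1).[0] != 0 \/ (u0 * v2 + u2 * v0).[0] != 0) ->
  a * u0 + b * v0 = 0 -> a * u1 + b * v1 = 0 -> a * u2 + b * v2 = 0 -> a = 0 /\ b = 0.
Proof.
move=> hf e0 e1 e2.
have A0 : a * (u1 * v2 + u2 * v1) = (a * u1 + b * v1) * v2 + (a * u2 + b * v2) * v1.
  ring2 (- b*v1*v2).
have B0 : b * (u1 * v2 + u2 * v1) = u1 * (a * u2 + b * v2) + u2 * (a * u1 + b * v1).
  ring2 (- a*u1*u2).
have A1 : a * (u0 * v2 + u2 * v0) = (a * u0 + b * v0) * v2 + (a * u2 + b * v2) * v0.
  ring2 (- b*v0*v2).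
have B1 : b * (u0 * v2 + u2 * v0) = u0 * (a * u2 + b * v2) + u2 * (a * u0 + b * v0).
  ring2 (- a*u0*u2).
rewrite e0 e1 e2 !mul0r !mulr0 !addr0 in A0 B0 A1 B1.
have [h|h] := hf; move/hnz: h => h.
- by split; apply/eqP; [move/eqP: A0 | move/eqP: B0]; rewrite mulf_eq0 (negbTE h) orbF.
- by split; apply/eqP; [move/eqP: A1 | move/eqP: B1]; rewrite mulf_eq0 (negbTE h) orbF.
Qed.

Lemma qh m : [/\ (q (2 * m)).[0] = 'X ^+ m, (q (2 * m + 1)).[0] = 0 & (q (2 * m + 2)).[0] = 'X ^+ m.+1].
Proof.
elim: m => [|m [IH0 IH1 IH2]].
  split.
  - by change ((1 : W2).[0] = 'X ^+ 0); rewrite -polyC1 hornerC expr0.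
  - by change ((0 : W2).[0] = 0); rewrite horner0.
  - by change (w2.[0] = 'X ^+ 1); rewrite hw2 expr1.
have -> : (2 * m.+1 = 2 * m + 2)%N by lia.
have -> : (2 * m + 2 + 1 = (2 * m).+3)%N by lia.
have -> : (2 * m + 2 + 2 = (2 * m + 1).+3)%N by lia.
rewrite !qS3 !hornerD !hornerM hw2 hw3.
have -> : ((2 * m + 1).+1 = 2 * m + 2)%N by lia.
have -> : ((2 * m).+1 = 2 * m + 1)%N by lia.
rewrite IH0 IH1 IH2; split => //.
- by rewrite mulr0 mul0r addr0.
- by rewrite mul0r addr0 [RHS]exprS.
Qed.

Lemma qnz m : (q (2 * m)).[0] != 0.
Proof. by case: (qh m) => -> _ _; rewrite expf_neq0 // polyX_eq0. Qed.

Lemma qnz2 n : (2 <= n)%N -> (q (n - 2)).[0] != 0 \/ (q (n - 1)).[0] != 0.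
Proof.
move=> hn; have [m [hm|hm]] : exists m, (n - 2 = 2 * m \/ n - 1 = 2 * m)%N.
  by exists ((n - 1) %/ 2)%N; lia.
- by left; rewrite hm qnz.
- by right; rewrite hm qnz.
Qed.

Definition inI n (p : W2) := exists c0 c1 c2, c0 * q (n - 2) + c1 * q (n - 1) + c2 * q n = p.

Lemma inI_lin n (p p' c c' : W2) : inI n p -> inI n p' -> inI n (c * p + c' * p').
Proof.
move=> [a0 [a1 [a2 <-]]] [b0 [b1 [b2 <-]]].
exists (c * a0 + c' * b0), (c * a1 + c' * b1), (c * a2 + c' * b2); ring.
Qed.

Lemma bez n e : (e <= n - 2)%N ->
  [/\ inI n (w3 ^+ e * q (n - 2 - e)), inI n (w3 ^+ e * q (n - 1 - e)) & inI n (w3 ^+ e * q (n - e))].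
Proof.
elim: e => [|e IH] he.
  rewrite !subn0 !expr0 !mul1r; split.
  - by exists 1, 0, 0; rewrite mul1r !mul0r !addr0.
  - by exists 0, 1, 0; rewrite mul1r !mul0r addr0 add0r.
  - by exists 0, 0, 1; rewrite mul1r !mul0r !add0r.
have [I0 I1 I2] := IH (ltnW he).
have [m [hm0 hm1 hm2 hm3 hm4]] : exists m, [/\ n - 2 - e.+1 = m, n - 2 - e = m.+1,
   n - 1 - e = m.+2, n - e = m.+3 & n - 1 - e.+1 = m.+1]%N.
  by exists (n - 2 - e.+1)%N; split; lia.
have -> : (n - e.+1 = m.+2)%N by lia.
rewrite hm0 hm4; rewrite hm1 in I0; rewrite hm2 in I1; rewrite hm3 in I2.
split.
- have -> : w3 ^+ e.+1 * q m = 1 * (w3 ^+ e * q m.+3) + (- w2) * (w3 ^+ e * q m.+1).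
    rewrite qS3 exprS; move: (q m) (q m.+1) => a b; ring.
  exact: inI_lin.
- have -> : w3 ^+ e.+1 * q m.+1 = w3 * (w3 ^+ e * q m.+1) + 0 * (w3 ^+ e * q m.+1) by rewrite exprS; ring.
  exact: inI_lin.
- have -> : w3 ^+ e.+1 * q m.+2 = w3 * (w3 ^+ e * q m.+2) + 0 * (w3 ^+ e * q m.+2) by rewrite exprS; ring.
  exact: inI_lin.
Qed.

Lemma bez_final n : (2 <= n)%N -> exists K c0 c1 c2, c0 * q (n - 2) + c1 * q (n - 1) + c2 * q n = w3 ^+ K.
Proof.
move=> hn; have [I0 _ _] := @bez n (n - 2) (leqnn (n - 2)).
rewrite subnn mulr1 in I0.
by exists (n - 2)%N.
Qed.


Lemma qzN2 (k : int) (m : nat) : k = m%:Z -> qz k = q m. Proof. by move=> ->. Qed.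
Lemma rzN2 (k : int) (m : nat) : k = m%:Z -> rz k = r m. Proof. by move=> ->. Qed.

Lemma hpow k : (2 : int) ^+ k = (2 ^ k)%N%:Z.
Proof. by rewrite -natz natrX. Qed.

Theorem mainTheorem17 (t n : nat) :
  (2 ^ t.-1 < n)%N -> (n <= 2 ^ t - 4)%N ->
  let i := (2 ^ t - 3 - n)%N in
  let j := (n - 2 ^ t.-1 + 1)%N in
  let u := (r j, w3 * r (j - 2), r (j - 1)) in
  let v := (w3 * q (i - 1), q (i + 1), q i) in
  (forall x y z : W2,
      q (n - 2) * x + q (n - 1) * y + q n * z = \det (mx3 (x, y, z) u v))
  /\
  (forall x y z : W2,
      q (n - 2) * x + q (n - 1) * y + q n * z = 0 <->
      exists a b : W2,
        [/\ x = a * u.1.1 + b * v.1.1,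
            y = a * u.1.2 + b * v.1.2 &
            z = a * u.2 + b * v.2])
  /\
  (forall a b : W2,
      [/\ a * u.1.1 + b * v.1.1 = 0,
          a * u.1.2 + b * v.1.2 = 0 &
          a * u.2 + b * v.2 = 0] -> a = 0 /\ b = 0).
Proof.
move=> h1 h2.
have ht : (0 < t)%N by move: h1 h2; case: t => //=; lia.
have h2t : (2 ^ t = 2 * 2 ^ t.-1)%N by rewrite -expnS prednK.
move=> i j u v.
set N := (2 ^ t.-1)%N.
have hi : (1 <= i)%N by rewrite /i; lia.
have hj : (2 <= j)%N by rewrite /j; lia.
have hij : (i + j + 2 = N)%N by rewrite /i /j; lia.
have hn : (n = i + 2 * j + 1)%N by rewrite /i /j; lia.
have [L1 L2 L3] := level_pow t.-1 (i%:Z).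
rewrite hpow -/N in L1 L2 L3.
have ej : (N%:Z - 2 - i%:Z = j%:Z) by lia.
rewrite ej in L1 L2 L3.
have e1 : E1 i j by apply: L1; apply/andP; split; lia.
have e2 : E2 i j by apply: L2; apply/andP; split; lia.
have e3 : E3 i j by apply: L3; apply/andP; split; lia.
have F0 : q (n - 2) = w3 * r (j - 2) * q i + r (j - 1) * q (i + 1).
  move: e1; rewrite /E1 (@qzN2 _ (n - 2)); last by lia.
  rewrite (@rzN2 _ (j - 2)); last by lia.
  rewrite (@qzN2 _ i) // (@rzN2 _ (j - 1)); last by lia.
  by rewrite (@qzN2 _ (i + 1)); last by lia.
have F1 : q (n - 1) = r j * q i + r (j - 1) * (w3 * q (i - 1)).
  move: e2; rewrite /E2 (@qzN2 _ (n - 1)); last by lia.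
  rewrite (@rzN2 _ j) // (@qzN2 _ i) // (@rzN2 _ (j - 1)); last by lia.
  rewrite (@qzN2 _ (i - 1)); last by lia.
  move=> ->; ring.
have F2 : q n = r j * q (i + 1) + w3 * r (j - 2) * (w3 * q (i - 1)).
  move: e3; rewrite /E3 (@qzN2 _ n); last by lia.
  rewrite (@rzN2 _ j) // (@qzN2 _ (i + 1)); last by lia.
  rewrite (@rzN2 _ (j - 2)); last by lia.
  rewrite (@qzN2 _ (i - 1)); last by lia.
  move=> ->; ring.
have hn2 : (2 <= n)%N by lia.
have hf := @qnz2 n hn2.
rewrite F0 F1 in hf.
have [K [c0 [c1 [c2 hc]]]] := @bez_final n hn2.
rewrite F0 F1 F2 in hc.
split; [|split].
- move=> x y z; rewrite F0 F1 F2; exact: det_gen.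
- move=> x y z; rewrite F0 F1 F2; split.
  + move=> hd.
    have [a [b [ex ey ez]]] := kernel_gen _ _ _ _ _ _ _ _ _ _ _ _ _ hc hf hd.
    by exists a, b; split.
  + by move=> [a [b [-> -> ->]]]; exact: surj_gen.
- move=> a b [a0 a1 a2].
  exact: (inj_gen _ _ _ _ _ _ _ _ hf a0 a1 a2).
Qed.
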